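(* Let $k_+,k_-$ be integers with $0\le k_-\le k_+$ and $1\leq k_++k_-\leq 2$. \begin{enumerate} \item Let $m$ be a positive integer and $n=(3^m+1)/2$. Then $\mathbb{Z}^n$ can be lattice packed by $\mathcal{B}(n,2,k_+,k_-)$ with density \[\delta = \frac{ \binom{n}{2}(k_++k_-)^2 +n(k_++k_-) +1 }{(2n-1)^2}.\] \item Let $m\geq 3$ be an odd integer and $n=(3^m-1)/2$. Then $\mathbb{Z}^n$ can be lattice packed by $\mathcal{B}(n,2,k_+,k_-)$ with density \[\delta = \frac{ \binom{n}{2}(k_++k_-)^2 +n(k_++k_-) +1 }{(2n+1)^2}.\] \end{enumerate}
   Context: $\mathcal{B}(n,t,k_+,k_-)=\{\mathbf{x}\in\mathbb{Z}^n : -k_-\le x_i\le k_+ \text{ for all } i,\ \mathrm{wt}(\mathbf{x})\le t\}$, where $\mathrm{wt}$ is the Hamming weight. A lattice packing of $\mathbb{Z}^n$ by $\mathcal{B}$ is a lattice $\Lambda\subseteq\mathbb{Z}^n$ (additive subgroup) such that the translates $\mathbf{v}+\mathcal{B}$, $\mathbf{v}\in\Lambda$, are pairwise disjoint; its density is $|\mathcal{B}|/\mathrm{vol}(\Lambda)$, where $\mathrm{vol}(\Lambda)=|\mathbb{Z}^n/\Lambda|$. *)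

(* Defs.v *)
From mathcomp Require Import all_boot all_order all_algebra.
Set Implicit Arguments. Unset Strict Implicit. Unset Printing Implicit Defensive.
Import Order.TTheory GRing.Theory Num.Theory.
Local Open Scope ring_scope.

Definition vec (n : nat) := 'rV[int]_n.

Definition wt (n : nat) (x : vec n) : nat := #|[set i : 'I_n | x ord0 i != 0]|.

Definition inB (n t kp km : nat) (x : vec n) : Prop :=
  (forall i : 'I_n, - (km%:Z) <= x ord0 i <= kp%:Z) /\ (wt x <= t)%N.

(* |B(n,t,k+,k-)|: B is in bijection with the vectors with entries in
   {0,...,k+ + k-} (shift every coordinate by -k-) of the corresponding weight. *)
Definition shiftv (n kp km : nat) (y : 'I_n -> 'I_(kp + km).+1) : vec n :=
  \row_i ((y i : nat)%:Z - km%:Z).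
Definition B_card (n t kp km : nat) : nat :=
  #|[set y : {ffun 'I_n -> 'I_(kp + km).+1} | (wt (shiftv y) <= t)%N]|.

Definition is_lattice (n : nat) (L : vec n -> Prop) : Prop :=
  L 0 /\ (forall u v, L u -> L v -> L (u - v)).

(* vol(L) = |Z^n / L| = N : there are N representatives, and every point of
   Z^n lies in exactly one coset r i + L. *)
Definition lattice_index (n : nat) (L : vec n -> Prop) (N : nat) : Prop :=
  exists r : 'I_N -> vec n, forall x : vec n, exists! i : 'I_N, L (x - r i).

Definition lattice_packing (n t kp km : nat) (L : vec n -> Prop) : Prop :=
  forall u v b1 b2 : vec n, L u -> L v -> inB t kp km b1 -> inB t kp km b2 ->
    u + b1 = v + b2 -> u = v.

Definition lattice_packed_with_density (n t kp km : nat) (delta : rat) : Prop :=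
  exists (L : vec n -> Prop) (N : nat),
    [/\ is_lattice L, lattice_index L N, lattice_packing t kp km L &
        (B_card n t kp km)%:R / N%:R = delta].

(* Main.v *)
From HB Require Import structures.
Require Import Defs.
From mathcomp Require Import all_boot all_order all_algebra all_fingroup.
From mathcomp Require Import cyclic finfield.
From mathcomp Require Import zify ring lra.
Set Implicit Arguments. Unset Strict Implicit. Unset Printing Implicit Defensive.
Import Order.TTheory GRing.Theory Num.Theory.
Local Open Scope ring_scope.


Lemma exists_gen (F : finFieldType) :
  exists g : F, forall k, (g ^+ k == 1) = (#|F|.-1 %| k)%N.
Proof.
have /cyclicP[x Dx] := field_unit_group_cyclic [set: {unit F}]%G.
exists (FinRing.uval x) => k.
have ox : #[x]%g = #|F|.-1 by rewrite -card_finField_unit Dx.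
rewrite -ox order_dvdn.
rewrite -(inj_eq val_inj) FinRing.val_unitX.
by [].
Qed.


Section Core.
Variable F : fieldType.
Hypothesis F3 : (3%:R : F) = 0.

Lemma L3 (x y z : F) : x != 0 -> y != 0 -> z != 0 ->
  x + y + z = 0 -> x^-1 + y^-1 + z^-1 = 0 -> x = y.
Proof.
move=> x0 y0 z0 s0 i0.
have e : y * z + x * z + x * y = 0.
  have -> : y * z + x * z + x * y = x * y * z * (x^-1 + y^-1 + z^-1).
    by field; rewrite ?x0 ?y0 ?z0 ?w0.
  by rewrite i0 mulr0.
have : (x - y) ^+ 2 = 0.
  have -> : (x - y) ^+ 2 = - (y * z + x * z + x * y) + (x + y + z) * (x + y) - 3%:R * x * y by ring.
  by rewrite e s0 F3; ring.
by move/eqP; rewrite expf_eq0 /= subr_eq0 => /eqP.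
Qed.

Lemma L4 (x y z w : F) : x != 0 -> y != 0 -> z != 0 -> w != 0 ->
  x + y + z + w = 0 -> x^-1 + y^-1 + z^-1 + w^-1 = 0 ->
  [\/ x = - y, x = - z | x = - w].
Proof.
move=> x0 y0 z0 w0 s0 i0.
have [sy|sy] := eqVneq (x + y) 0.
  by apply: Or31; rewrite -(addrK y x) sy sub0r.
have e : z * w * (x + y) + x * y * (z + w) = 0.
  have -> : z * w * (x + y) + x * y * (z + w) = x * y * z * w * (x^-1 + y^-1 + z^-1 + w^-1).
    by field; rewrite ?x0 ?y0 ?z0 ?w0.
  by rewrite i0 mulr0.
have zw : z + w = - (x + y) by apply/eqP; rewrite -addr_eq0 addrC !addrA s0.
move: e; rewrite zw mulrN -mulNr -mulrDl => /eqP; rewrite mulf_eq0 (negbTE sy) orbF subr_eq0 => e.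
have : (x + z) * (x + w) = 0.
  have -> : (x + z) * (x + w) = x * (x + y + z + w) - x * y + z * w by ring.
  by rewrite s0 (eqP e); ring.
move/eqP; rewrite mulf_eq0 !addr_eq0 => /orP[/eqP|/eqP]; by [apply: Or32 | apply: Or33].
Qed.

Lemma sign3 (z : int) : z != 0 -> (-2 <= z <= 2)%R ->
  (z%:~R : F) = 1 \/ (z%:~R : F) = -1.
Proof.
move=> z0 zr.
have : [\/ z = 1, z = -1, z = 2 | z = -2].
  have : (z == 1) || (z == -1) || (z == 2) || (z == -2) by move: z0 zr; lia.
  by case/orP=>[/orP[/orP[]|]|] /eqP ->; [apply: Or41|apply: Or42|apply: Or43|apply: Or44].
have e2 : (2%:~R : F) = -1.
  apply/eqP; rewrite -addr_eq0 -(natrD F 2 1) -/(3%:R) F3 //.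
case=> ->; rewrite ?e2.
- by left.
- by right.
- by right.
- by left; rewrite mulrNz e2 opprK.
Qed.

Lemma coreK n (h : 'I_n -> F) (hnz : forall i, h i != 0)
  (hd : forall i j, i != j -> h i != h j /\ h i != - h j) (d : vec n) :
  (wt d <= 4)%N -> (forall i, (-2 <= d ord0 i <= 2)%R) ->
  \sum_i h i *~ d ord0 i = 0 -> \sum_i (h i)^-1 *~ d ord0 i = 0 -> d = 0.
Proof.
move=> hw hr s1 s2.
set J := [set i | d ord0 i != 0].
pose c i : F := (d ord0 i)%:~R.
pose x i := c i * h i.
have cJ i : i \in J -> c i = 1 \/ c i = -1.
  by rewrite inE => /sign3; apply; apply: hr.
have xV i : i \in J -> (x i)^-1 = c i * (h i)^-1.
  by rewrite /x => /cJ [] ->; rewrite ?mul1r // !mulN1r invrN.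
have xnz i : i \in J -> x i != 0.
  by rewrite /x => /cJ [] ->; rewrite ?mul1r ?mulN1r ?oppr_eq0 hnz.
have xd i j : i \in J -> j \in J -> i != j -> x i != x j /\ x i != - x j.
  rewrite /x => /cJ ci /cJ cj /hd [h1 h2].
  case: ci cj => -> [] ->; rewrite ?mul1r ?mulN1r ?opprK ?eqr_opp ?eqr_oppLR ?opprK; by split.
have S1 : \sum_(i <- enum J) x i = 0.
  rewrite big_enum /=; apply: (etrans _ s1); rewrite [RHS](bigID (mem J)) /= [X in _ = _ + X]big1 ?addr0.
    by apply: eq_bigr => i _; rewrite /x /c mulrzl.
  by move=> i; rewrite inE negbK => /eqP ->; rewrite mulr0z.
have S2 : \sum_(i <- enum J) (x i)^-1 = 0.
  rewrite big_enum /=; apply: (etrans _ s2); rewrite [RHS](bigID (mem J)) /= [X in _ = _ + X]big1 ?addr0.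
    by apply: eq_bigr => i iJ; rewrite xV // /c mulrzl.
  by move=> i; rewrite inE negbK => /eqP ->; rewrite mulr0z.
have us : uniq (enum J) := enum_uniq _.
have sz : size (enum J) = wt d by rewrite -cardE.
have mJ i : i \in enum J -> i \in J by rewrite mem_enum.
move: S1 S2 us sz mJ; case: (enum J) => [|a [|b [|e [|f [|g s]]]]] S1 S2 us sz mJ.
- apply/matrixP => i j; rewrite (ord1 i) !mxE.
  have : #|J| = 0%N by exact: (esym sz).
  move/eqP; rewrite cards_eq0 => /eqP J0.
  by have := in_set0 j; rewrite -J0 inE => /negbFE /eqP.
- rewrite big_cons big_nil addr0 in S1.
  by move: (xnz a (mJ a (mem_head _ _))); rewrite S1 eqxx.
- rewrite !big_cons big_nil addr0 in S1.
  have aJ := mJ a (mem_head _ _). have bJ : b \in J by apply: mJ; rewrite !inE eqxx orbT.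
  move: us => /= /andP[]; rewrite inE => ab _.
  by have [_] := xd a b aJ bJ ab; rewrite -addr_eq0 S1 eqxx.
- rewrite !big_cons big_nil addr0 addrA in S1.
  rewrite !big_cons big_nil addr0 addrA in S2.
  have aJ := mJ a (mem_head _ _). have bJ : b \in J by apply: mJ; rewrite !inE eqxx ?orbT.
  have eJ : e \in J by apply: mJ; rewrite !inE eqxx ?orbT.
  move: us => /= /andP[]; rewrite !inE negb_or => /andP[ab _] _.
  have [] := xd a b aJ bJ ab.
  by rewrite (L3 (xnz a aJ) (xnz b bJ) (xnz e eJ) S1 S2) eqxx.
- rewrite !big_cons big_nil addr0 !addrA in S1.
  rewrite !big_cons big_nil addr0 !addrA in S2.
  have aJ := mJ a (mem_head _ _). have bJ : b \in J by apply: mJ; rewrite !inE eqxx ?orbT.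
  have eJ : e \in J by apply: mJ; rewrite !inE eqxx ?orbT.
  have fJ : f \in J by apply: mJ; rewrite !inE eqxx ?orbT.
  move: us => /= /andP[]; rewrite !inE !negb_or => /and3P[ab ae af] _.
  case: (L4 (xnz a aJ) (xnz b bJ) (xnz e eJ) (xnz f fJ) S1 S2) => E;
    [have [_] := xd a b aJ bJ ab | have [_] := xd a e aJ eJ ae | have [_] := xd a f aJ fJ af];
    by rewrite E eqxx.
- by move: hw; rewrite -sz.
Qed.
End Core.


Lemma reps (F : fieldType) (a : F) n : (0 < n)%N ->
  (forall k, (a ^+ k == 1) = (2 * n %| k)%N) ->
  (forall i : 'I_n, a ^+ i != 0) /\
  (forall i j : 'I_n, i != j -> a ^+ i != a ^+ j /\ a ^+ i != - a ^+ j).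
Proof.
move=> n0 ha.
have a0 : a != 0.
  apply/eqP => a0; have := ha (2 * n)%N; rewrite dvdnn a0 expr0n.
  have -> : (2 * n == 0)%N = false by lia.
  by rewrite mulr0n eq_sym oner_eq0.
have an : a ^+ n = -1.
  have h1 : a ^+ n != 1 by rewrite ha; apply/negP => /dvdn_leq; lia.
  have h2 : (a ^+ n - 1) * (a ^+ n + 1) = 0.
    have : a ^+ (2 * n) = 1 by apply/eqP; rewrite ha.
    by rewrite mulnC exprM => e; rewrite -subr_sqr e expr1n subrr.
  move/eqP: h2; rewrite mulf_eq0 subr_eq0 (negbTE h1) /= addr_eq0 => /eqP //.
have eqX p q : (p <= q)%N -> a ^+ p = a ^+ q -> (2 * n %| q - p)%N.
  move=> pq e; rewrite -ha; apply/eqP.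
  apply: (mulfI (expf_neq0 p a0)); rewrite -exprD subnKC // mulr1 e //.
have nz i : a ^+ i != 0 by rewrite expf_neq0.
split => // i j ij; split.
- apply/negP => /eqP e.
  have [lt|gt|eq] := ltngtP i j.
  + have := eqX _ _ (ltnW lt) e => /dvdn_leq; have := ltn_ord j; lia.
  + have := eqX _ _ (ltnW gt) (esym e) => /dvdn_leq; have := ltn_ord i; lia.
  + by move: ij; rewrite (val_inj eq) eqxx.
- apply/negP => /eqP e.
  have e2 : a ^+ i = a ^+ (n + j) by rewrite exprD an mulN1r.
  have := eqX i (n + j) (leq_trans (ltnW (ltn_ord i)) (leq_addr _ _)) e2 => /dvdn_leq.
  have := ltn_ord i; have := ltn_ord j; lia.
Qed.

Lemma morph_sumz (R : zmodType) (f : R -> R) (f0 : f 0 = 0)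
  (fD : forall x y, f (x + y) = f x + f y) n (x : 'I_n -> R) (z : 'I_n -> int) :
  f (\sum_i x i *~ z i) = \sum_i f (x i) *~ z i.
Proof.
rewrite (big_morph f fD f0); apply: eq_bigr => i _.
have fN y : f (- y) = - f y.
  by apply/eqP; rewrite -addr_eq0 -fD addrC subrr f0.
have fn y k : f (y *+ k) = f y *+ k.
  by elim: k => [|k IH]; rewrite ?mulr0n // !mulrS fD IH.
case: (z i) => k; first by rewrite -!pmulrn fn.
by rewrite !NegzE !mulrNz fN -!pmulrn fn.
Qed.

Lemma bin2_2 n : ('C(n, 2) * 2 = n * n.-1)%N.
Proof. by elim: n => [|n IH] //; rewrite binS bin1 mulnDl IH; case: n {IH} => //= n; lia. Qed.


Lemma fill (G : finZmodType) (I : {set G}) :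
  0 \in I -> (forall a b, a \in I -> b \in I -> a + b \in I) ->
  (forall x : G, x *+ 3 = 0) -> (#|G| < 3 * #|I|)%N -> forall y, y \in I.
Proof.
move=> I0 ID H3 big y; apply/negPn/negP => /negP yI.
have x2 (x : G) : - x = x + x.
  by apply/eqP; rewrite eq_sym -subr_eq0 opprK -(H3 x) !mulrS mulr0n addr0 addrA.
have IN a : a \in I -> - a \in I by move=> aI; rewrite x2 ID.
pose A2 := [set y + a | a in I].
pose A3 := [set y + y + a | a in I].
have c2 : #|A2| = #|I| by rewrite card_imset //; apply: addrI.
have c3 : #|A3| = #|I| by rewrite card_imset //; apply: addrI.
have d12 : I :&: A2 = set0.
  apply/setP => z; rewrite !inE; apply/negbTE/negP => /andP[zI /imsetP[a aI za]].
  apply: yI; have -> : y = z + - a by rewrite za addrK.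
  by rewrite ID ?IN.
have d13 : (I :|: A2) :&: A3 = set0.
  apply/setP => z; rewrite !inE; apply/negbTE/negP => /andP[/orP[zI|/imsetP[a aI za]] /imsetP[b bI zb]].
    apply: yI; have yy : y + y \in I.
      have -> : y + y = z + - b by rewrite zb addrK.
      by rewrite ID ?IN.
    have -> : y = (y + y) + (y + y) by rewrite -x2 -x2 opprK.
    by rewrite ID.
  apply: yI; have -> : y = a + - b by apply: (addrI y); rewrite addrA -za zb addrK.
  by rewrite ID ?IN.
have : (#|I :|: A2 :|: A3| = 3 * #|I|)%N.
  by rewrite cardsU d13 cards0 subn0 cardsU d12 cards0 subn0 c2 c3; lia.
move=> e; move: big; rewrite -e.
by rewrite ltnNge max_card.
Qed.

Lemma wtB n (u v : vec n) : (wt (u - v)%R <= wt u + wt v)%N.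
Proof.
rewrite /wt; apply: leq_trans (leq_card_setU _ _).
apply: subset_leq_card; apply/subsetP => i; rewrite !inE mxE.
by apply: contraR; rewrite negb_or !negbK => /andP[/eqP a /eqP b]; rewrite mxE a b subr0.
Qed.

Lemma rng (kp km : nat) (a b : int) : (kp + km <= 2)%N ->
  - (km%:Z) <= a <= kp%:Z -> - (km%:Z) <= b <= kp%:Z -> -2 <= a - b <= 2.
Proof. move=> hk; lia. Qed.

Section Gen.
Variable n : nat.
Variable G : finZmodType.
Variable g : 'I_n -> G.
Definition phi (d : vec n) : G := \sum_i g i *~ d ord0 i.
Hypothesis H3 : forall x : G, x *+ 3 = 0.
Hypothesis Hinj : forall d : vec n, (wt d <= 4)%N ->
  (forall i, (-2 <= d ord0 i <= 2)%R) -> phi d = 0 -> d = 0.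
Hypothesis Hbig : (#|G| < 3 * B_card n 2 2 0)%N.

Lemma phiB u v : phi (u - v) = phi u - phi v.
Proof. by rewrite /phi -sumrB; apply: eq_bigr => i _; rewrite !mxE mulrzBr. Qed.

Lemma phi0 : phi 0 = 0.
Proof. by rewrite -(subrr 0) phiB subrr. Qed.

Definition psi (f : {ffun 'I_n -> 'I_(2 + 0).+1}) : G :=
  phi (shiftv (kp := 2) (km := 0) f).

Lemma psiE f : psi f = \sum_i g i *+ (f i : nat).
Proof. by rewrite /psi /phi; apply: eq_bigr => i _; rewrite !mxE subr0. Qed.

Lemma mulrn_mod3 (x : G) k : x *+ k = x *+ (k %% 3).
Proof. by rewrite {1}(divn_eq k 3) mulrnDr mulrnA H3 add0r. Qed.

Definition Iset : {set G} := [set psi f | f in {ffun 'I_n -> 'I_(2 + 0).+1}].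

Lemma Iset_all y : y \in Iset.
Proof.
apply: fill; last first.
- apply: leq_trans Hbig _; rewrite leq_mul2l /=.
  rewrite /B_card -(card_in_imset (f := psi)); last first.
    move=> f f'; rewrite !inE => wf wf' e.
    have : shiftv (kp := 2) (km := 0) f - shiftv (kp := 2) (km := 0) f' = 0.
      apply: Hinj.
      - by apply: leq_trans (wtB _ _) _; exact: (leq_add wf wf').
      - move=> i; rewrite !mxE; have := ltn_ord (f i); have := ltn_ord (f' i); lia.
      - by rewrite phiB -/(psi f) -/(psi f') e subrr.
    move/eqP; rewrite subr_eq0 => /eqP e2.
    apply/ffunP => i; apply: val_inj => /=.
    by move: e2 => /matrixP /(_ ord0 i); rewrite !mxE !subr0 => -[].
  by apply: subset_leq_card; apply/subsetP => z /imsetP[f _ ->]; apply: imset_f.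
- exact: H3.
- move=> a b /imsetP[f _ ->] /imsetP[f' _ ->].
  apply/imsetP; exists [ffun i => inZp (f i + f' i)] => //.
  rewrite !psiE -big_split; apply: eq_bigr => i _ /=.
  by rewrite ffunE -mulrnDr [LHS]mulrn_mod3.
- rewrite /Iset; apply/imsetP; exists [ffun => ord0] => //.
  by rewrite psiE big1 // => i _; rewrite ffunE.
Qed.


Theorem gen_packing kp km : (kp + km <= 2)%N ->
  lattice_packed_with_density n 2 kp km ((B_card n 2 kp km)%:R / (#|G|)%:R).
Proof.
move=> hk.
pose L := fun x : vec n => phi x = 0.
pose f0 : {ffun 'I_n -> 'I_(2+0).+1} := [ffun => ord0].
pose pre (y : G) := odflt f0 [pick f | psi f == y].
have preE y : psi (pre y) = y.
  rewrite /pre; case: pickP => [f /eqP //|none].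
  have /imsetP[f _ e] := Iset_all y.
  by move: (none f); rewrite e eqxx.
exists L, #|G|; split.
- split; first exact: phi0.
  by move=> u v; rewrite /L phiB => -> ->; rewrite subrr.
- exists (fun i => shiftv (kp:=2) (km:=0) (pre (enum_val i))) => x.
  exists (enum_rank (phi x)); split.
    by rewrite /L phiB -/(psi _) preE enum_rankK subrr.
  move=> j; rewrite /L phiB -/(psi _) preE => /eqP; rewrite subr_eq0 => /eqP ->.
  exact: enum_valK.
- move=> u v b1 b2 Lu Lv [r1 w1] [r2 w2] e.
  have : b1 - b2 = 0.
    apply: Hinj.
    - exact: leq_trans (wtB _ _) (leq_add w1 w2).
    - by move=> i; rewrite !mxE; apply: rng hk (r1 i) (r2 i).
    - have -> : b1 - b2 = v - u.
        by rewrite -[b1](addKr u) e addrA addrK addrC.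
      by rewrite phiB Lu Lv subrr.
  move/eqP; rewrite subr_eq0 => /eqP eb.
  by move: e; rewrite eb => /addIr.
- by [].
Qed.
End Gen.


Lemma coefQ (k n : nat) :
  let Q := (1 + 'X *+ k : {poly int}) ^+ n in
  [/\ Q`_0 = 1, Q`_1 = (n * k)%:R & Q`_2 = ('C(n, 2) * k ^ 2)%:R].
Proof.
elim: n => [|n [IH0 IH1 IH2]] /=.
  by rewrite expr0 !coefC.
rewrite exprSr mulrDr mulr1 mulrnAr !coefD !coefMn !coefMX /= IH0 IH1 IH2.
split.
- by rewrite mul0rn addr0.
- by rewrite -natrD; congr (_%:R); lia.
- rewrite -mulrnA -natrD; congr (_%:R); rewrite binS bin1; lia.
Qed.

Lemma B_card2 n kp km :
  B_card n 2 kp km = ('C(n, 2) * (kp + km) ^ 2 + n * (kp + km) + 1)%N.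
Proof.
set k := (kp + km)%N.
pose c : 'I_k.+1 := inord km.
have kmk : (km < k.+1)%N by rewrite /k; lia.
pose w (y : {ffun 'I_n -> 'I_k.+1}) := #|[set i | y i != c]|.
have wE (y : {ffun 'I_n -> 'I_k.+1}) : wt (shiftv (kp:=kp) (km:=km) y) = w y.
  rewrite /wt /w; apply: eq_card => i; rewrite !inE mxE subr_eq0.
  by rewrite /c -(inj_eq val_inj) /= inordK.
have P1 : \sum_(y : {ffun 'I_n -> 'I_k.+1}) ('X^(w y) : {poly int}) = (1 + 'X *+ k) ^+ n.
  have inner : \sum_(j : 'I_k.+1) (if j == c then 1 else 'X : {poly int}) = 1 + 'X *+ k.
    rewrite (bigD1 c) //= eqxx; congr (_ + _).
    rewrite (eq_bigr (fun _ => 'X)); last by move=> j /negbTE ->.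
    by rewrite sumr_const cardC1 card_ord.
  have -> : (1 + 'X *+ k) ^+ n = \prod_(i : 'I_n) (1 + 'X *+ k : {poly int}).
    by rewrite prodr_const card_ord.
  rewrite -inner bigA_distr_bigA /=; apply: eq_bigr => y _.
  rewrite (eq_bigr (fun i => if y i != c then 'X else 1)); last first.
    by move=> i _; case: (y i == c).
  rewrite -big_mkcond /= prodr_const /w; congr (_ ^+ _).
  by apply: eq_card => i; rewrite !inE.
have cE : B_card n 2 kp km =
   (\sum_(y : {ffun 'I_n -> 'I_k.+1}) ((w y == 0%N) + (w y == 1%N) + (w y == 2%N)))%N.
  rewrite /B_card -sum1_card big_mkcond /=; apply: eq_bigr => y _.
  by rewrite inE wE; case: (w y) => [|[|[|m]]].
have cj j : \sum_(y : {ffun 'I_n -> 'I_k.+1}) ((w y == j) : nat)%:R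
    = ((1 + 'X *+ k : {poly int}) ^+ n)`_j.
  by rewrite -P1 coef_sum; apply: eq_bigr => y _; rewrite coefXn eq_sym.
have [Q0 Q1 Q2] := coefQ k n.
apply/eqP; rewrite -(eqr_nat int); apply/eqP.
rewrite cE natr_sum.
rewrite (eq_bigr (fun y => ((w y == 0%N) : nat)%:R + ((w y == 1%N) : nat)%:R + ((w y == 2%N) : nat)%:R)); last first.
  by move=> y _; rewrite !natrD.
rewrite !big_split /= !cj Q0 Q1 Q2 !natrD; ring.
Qed.

Definition FF (F : finFieldType) := (F * F)%type.
HB.instance Definition _ (F : finFieldType) := GRing.Zmodule.on (FF F).
HB.instance Definition _ (F : finFieldType) := Finite.on (FF F).

Lemma F3mul (F : fieldType) : (3%:R : F) = 0 -> forall x : F, x *+ 3 = 0.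
Proof. by move=> F3 x; rewrite -mulr_natr F3 mulr0. Qed.

Theorem corollary3 (kp km : nat) :
  (km <= kp)%N -> (1 <= kp + km <= 2)%N ->
  (forall m : nat, (0 < m)%N ->
     let n := ((3 ^ m + 1) %/ 2)%N in
     lattice_packed_with_density n 2 kp km
       (('C(n, 2) * (kp + km) ^ 2 + n * (kp + km) + 1)%:R
          / ((2 * n - 1) ^ 2)%:R)) /\
  (forall m : nat, (3 <= m)%N -> odd m ->
     let n := ((3 ^ m - 1) %/ 2)%N in
     lattice_packed_with_density n 2 kp km
       (('C(n, 2) * (kp + km) ^ 2 + n * (kp + km) + 1)%:R
          / ((2 * n + 1) ^ 2)%:R)).
Proof.
move=> hkm /andP[_ hk]; split.
- move=> m m0 n.
  have mpos : (0 < m * 2)%N by lia.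
  have [F chF cardF] := @pPrimePowerField 3 (m * 2) isT mpos.
  set q := (3 ^ m)%N.
  have F3 : (3%:R : F) = 0 := pcharf0 chF.
  have oq : odd q by rewrite oddX orbT.
  have n2 : (n * 2 = q + 1)%N by rewrite /n divnK // dvdn2 oddD oq.
  have q1 : (1 < q)%N by rewrite /q -[1%N](expn0 3) ltn_exp2l.
  have [g hg] := exists_gen F.
  have cF : (#|F|.-1 = (q - 1) * (2 * n))%N.
    rewrite cardF expnM -/q -subn1 -[1%N in LHS](exp1n 2) subn_sqr; congr (_ * _)%N; lia.
  pose a := g ^+ (q - 1).
  have ha k : (a ^+ k == 1) = (2 * n %| k)%N.
    by rewrite -exprM hg cF dvdn_pmul2l //; lia.
  have n0 : (0 < n)%N by lia.
  have [hnz hd] := reps n0 ha.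
  pose h (i : 'I_n) := a ^+ i.
  have hq i : h i ^+ q = (h i)^-1.
    have e1 : h i ^+ q * h i = 1.
      rewrite -exprSr /h -exprM; apply/eqP; rewrite ha.
      have -> : q.+1 = (2 * n)%N by lia.
      exact: dvdn_mull.
    by rewrite -[LHS]mulr1 -(mulfV (hnz i)) mulrA e1 mul1r.
  have pq : [pchar F].-nat q by rewrite /q pnatX pnatE // chF.
  have sD x y : (x + y) ^+ q = x ^+ q + y ^+ q := exprDn_pchar x y pq.
  have s0 : (0 : F) ^+ q = 0 by rewrite expr0n; have -> : (q == 0)%N = false by lia.
  have -> : ('C(n, 2) * (kp + km) ^ 2 + n * (kp + km) + 1)%:R / ((2 * n - 1) ^ 2)%:R
      = (B_card n 2 kp km)%:R / (#|F|)%:R :> rat.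
    rewrite B_card2 cardF expnM -/q; congr (_ / (_ ^ _)%:R); lia.
  apply: (gen_packing (g := h)) => //.
  + exact: F3mul.
  + move=> d dw dr s1.
    apply: (coreK F3 hnz hd dw dr s1).
    rewrite (eq_bigr (fun i => h i ^+ q *~ d ord0 i)); last by move=> i _; rewrite hq.
    rewrite -(morph_sumz (f := fun x => x ^+ q)) //; move: s1; rewrite /phi => ->; exact: s0.
  + rewrite B_card2 cardF expnM -/q.
    have := bin2_2 n; nia.
- move=> m m3 _ n.
  have mpos : (0 < m)%N by lia.
  have [F chF cardF] := @pPrimePowerField 3 m isT mpos.
  set q := (3 ^ m)%N.
  have F3 : (3%:R : F) = 0 := pcharf0 chF.
  have oq : odd q by rewrite oddX orbT.
  have q27 : (27 <= q)%N by rewrite /q -[27%N]/(3 ^ 3)%N leq_exp2l.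
  have n2 : (n * 2 = q - 1)%N by rewrite /n divnK // dvdn2 oddB ?oq //; lia.
  have [g hg] := exists_gen F.
  have ha k : (g ^+ k == 1) = (2 * n %| k)%N.
    by rewrite hg cardF -/q; congr (_ %| _)%N; lia.
  have n0 : (0 < n)%N by lia.
  have [hnz hd] := reps n0 ha.
  pose h (i : 'I_n) := g ^+ i.
  pose gg (i : 'I_n) : FF F := (h i, (h i)^-1).
  have -> : ('C(n, 2) * (kp + km) ^ 2 + n * (kp + km) + 1)%:R / ((2 * n + 1) ^ 2)%:R
      = (B_card n 2 kp km)%:R / (#|(FF F : finZmodType)|)%:R :> rat.
    rewrite B_card2 card_prod cardF -/q; congr (_ / _%:R); lia.
  apply: (gen_packing (g := gg)) => //.
  + move=> [x y]; rewrite (_ : (x, y) *+ 3 = (x *+ 3, y *+ 3)) //.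
    by rewrite !(F3mul F3).
  + move=> d dw dr s.
    apply: (coreK F3 hnz hd dw dr).
    * have := congr1 fst s; rewrite /phi raddf_sum /= => e; apply: etrans e.
      by apply: eq_bigr => i _; rewrite raddfMz.
    * have := congr1 snd s; rewrite /phi raddf_sum /= => e; apply: etrans e.
      by apply: eq_bigr => i _; rewrite raddfMz.
  + rewrite B_card2 card_prod cardF -/q.
    have := bin2_2 n; nia.
Qed.
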